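(* Let $S$ be a sign string of length $n$ and $J$ a state string such that $(S,J)$ is a dominant lattice path, and let $w^S_J\in\mathrm{Inv}(V^S)$ be the value of the web produced by the growth algorithm from $(S,J)$. Then $$w^S_J=e^S_J+\sum_{J'<J}c(S,J,J')\,e^S_{J'}$$ for some coefficients $c(S,J,J')\in\mathbb{N}[v,v^{-1}]$ (polynomials in $v^{\pm1}$ with nonnegative integer coefficients), where state strings are ordered lexicographically (with $-1<0<1$).
   Context: Let $v$ be an indeterminate, $q^{1/2}=-v$, ground field $\mathbb{C}(v)$. $V^+$ and $V^-$ are the 3-dimensional representations of $U_q(\mathfrak{sl}(3))$ (tensor products via $\bar\Delta(E_i)=E_i\otimes1+K_i^{-1}\otimes E_i$, $\bar\Delta(F_i)=F_i\otimes K_i+1\otimes F_i$, $\bar\Delta(K_i)=K_i\otimes K_i$) with bases $e^\pm_1,e^\pm_0,e^\pm_{-1}$: on $V^+$, $E_1e^+_0=e^+_1$, $F_1e^+_1=e^+_0$, $E_2e^+_{-1}=e^+_0$, $F_2e^+_0=e^+_{-1}$, $K_1=\mathrm{diag}(q^{1/2},q^{-1/2},1)$, $K_2=\mathrm{diag}(1,q^{1/2},q^{-1/2})$ on $(e^+_1,e^+_0,e^+_{-1})$; on $V^-$, $E_1e^-_{-1}=e^-_0$, $F_1e^-_0=e^-_{-1}$, $E_2e^-_0=e^-_1$, $F_2e^-_1=e^-_0$, $K_1=\mathrm{diag}(1,q^{1/2},q^{-1/2})$, $K_2=\mathrm{diag}(q^{1/2},q^{-1/2},1)$ on $(e^-_1,e^-_0,e^-_{-1})$;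 other $E_i,F_i$ on basis vectors are $0$. For $S=(s_1,\dots,s_n)\in\{+,-\}^n$ and $J\in\{-1,0,1\}^n$: $V^S=V^{s_1}\otimes\cdots\otimes V^{s_n}$, $e^S_J=e^{s_1}_{j_1}\otimes\cdots\otimes e^{s_n}_{j_n}$. Dominance: with $\mu^\pm$ fundamental weights, $\alpha_i$ simple roots, $\mathrm{wt}(e^+_1)=\mu^+$, $\mathrm{wt}(e^+_0)=\mu^+-\alpha_1$, $\mathrm{wt}(e^+_{-1})=\mu^+-\alpha_1-\alpha_2$, $\mathrm{wt}(e^-_1)=\mu^-$, $\mathrm{wt}(e^-_0)=\mu^--\alpha_2$, $\mathrm{wt}(e^-_{-1})=\mu^--\alpha_1-\alpha_2$; $(S,J)$ is dominant if the partial sums $\pi_k=\sum_{\ell\le k}\mathrm{wt}(e^{s_\ell}_{j_\ell})$ are nonnegative integral combinations of $\mu^+,\mu^-$ and $\pi_n=0$. Elementary tensors: $b^{+-}=e^+_1\otimes e^-_{-1}+v^{-1}e^+_0\otimes e^-_0+v^{-2}e^+_{-1}\otimes e^-_1$, $b^{-+}$ likewise with signs swapped; $t^{---}=e^-_1\otimes e^-_0\otimes e^-_{-1}+v^{-1}e^-_0\otimes e^-_1\otimes e^-_{-1}+v^{-1}e^-_1\otimes e^-_{-1}\otimes e^-_0+v^{-2}e^-_0\otimes e^-_{-1}\otimes e^-_1+v^{-2}e^-_{-1}\otimes e^-_1\otimes e^-_0+v^{-3}e^-_{-1}\otimes e^-_0\otimes e^-_1$, $t^{+++}$ likewise with $+$;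 $\sigma_{\pm\mp}(e^\pm_{-1}\otimes e^\mp_1)=1$, $\sigma_{\pm\mp}(e^\pm_0\otimes e^\mp_0)=v$, $\sigma_{\pm\mp}(e^\pm_1\otimes e^\mp_{-1})=v^2$, other pairs $0$. Webs and values: a web with boundary $S$ is an oriented graph in the closed lower half-plane with endpoints $1..n$ on $y=0$ left to right, other vertices trivalent sources or sinks, edge at endpoint $k$ pointing toward it iff $s_k=+$. Its value is computed after isotoping so each trivalent vertex has all edges leaving upward, by reading horizontal slices bottom to top (strands labeled $+$ if pointing up, $-$ if down): a cup with legs $(a,b)$ inserts $b^{ab}$, a vertex inserts $t^{+++}$ or $t^{---}$, a cap with legs $(a,b)$ applies $\sigma_{ab}$; this is isotopy invariant. Growth algorithm: starting from $n$ parallel strands with strings $(S,J)$, repeatedly apply to adjacent positions with signs $(s,s')$ and states $(j,j')$ one of: if $s'\ne s$ and $(j,j')\in\{(1,0),(0,0),(0,-1)\}$, attach an ''H'' (two trivalent vertices joined by a horizontal edge, each joined to its strand above and a new strand below), new signs $(s',s)$, new states $(0,1),(-1,1),(-1,0)$ respectively; if $s'\ne s$ and $(j,j')=(1,-1)$, join by a cup and delete both positions; if $s'=s$ and $(j,j')\in\{(1,0),(0,-1),(1,-1)\}$, join at a trivalent vertex whose third edge continues downward as one position of opposite sign with state $1,-1,0$ respectively. For dominant $(S,J)$ the algorithm ends with empty strings, producing a web with boundary $S$. *)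

(* Defs.v *)
From HB Require Import structures.
From mathcomp Require Import all_boot all_order all_algebra.
Set Implicit Arguments. Unset Strict Implicit. Unset Printing Implicit Defensive.
Import Order.TTheory GRing.Theory Num.Theory.
Local Open Scope ring_scope.

(* Signs: true = "+", false = "-".  States: the integers -1, 0, 1. *)
Definition is_state (j : int) : bool := [|| j == -1, j == 0 | j == 1].

(* weights are written in the basis (mu^+, mu^-) of fundamental weights *)
Definition wadd (x y : int * int) : int * int := (x.1 + y.1, x.2 + y.2).
Definition wsub (x y : int * int) : int * int := (x.1 - y.1, x.2 - y.2).
Definition mu_p : int * int := (1, 0).
Definition mu_m : int * int := (0, 1).
Definition alpha1 : int * int := wsub (wadd mu_p mu_p) mu_m.
Definition alpha2 : int * int := wsub (wadd mu_m mu_m) mu_p.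

Definition wt (s : bool) (j : int) : int * int :=
  if s then
    (if j == 1 then mu_p
     else if j == 0 then wsub mu_p alpha1
     else wsub (wsub mu_p alpha1) alpha2)
  else
    (if j == 1 then mu_m
     else if j == 0 then wsub mu_m alpha2
     else wsub (wsub mu_m alpha1) alpha2).

Definition partial_wt (S : seq bool) (J : seq int) (k : nat) : int * int :=
  foldr wadd (0, 0) (take k [seq wt sj.1 sj.2 | sj <- zip S J]).

Definition dominant (S : seq bool) (J : seq int) : Prop :=
  [/\ size J = size S, all is_state J,
      (forall k, (k <= size S)%N ->
         0 <= (partial_wt S J k).1 /\ 0 <= (partial_wt S J k).2)
    & partial_wt S J (size S) = (0, 0)].

Fixpoint lexlt (a b : seq int) : bool :=
  match a, b with
  | x :: a', y :: b' => (x < y) || ((x == y) && lexlt a' b')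
  | _, _ => false
  end.

Fixpoint all_strings (n : nat) : seq (seq int) :=
  match n with
  | 0 => [:: [::]]
  | n'.+1 => [seq j :: J | j <- [:: 1; 0; -1], J <- all_strings n']
  end.

Section Values.
Variable C : numClosedFieldType.

Definition F : Type := {fraction {poly C}}.
Definition v : F := @FracField.tofrac {poly C} 'X.

(* an element of V^S (|S| = n) is given by its coordinates x J on the basis
   e^S_J, J a state string of length n *)
Definition vec : Type := seq int -> F.

(* the unit of V^{empty} = C(v) *)
Definition vec_one : vec := fun J => if J == [::] then 1 else 0.

(* elementary tensors (coordinates); the sign arguments only record which of
   b^{+-}, b^{-+} (resp. t^{+++}, t^{---}, sigma_{+-}, sigma_{-+}) is meant:
   the coordinates are the same in both cases *)
Definition btens (a b : bool) : vec := fun J =>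
  match J with
  | [:: x; y] =>
      if (x == 1) && (y == -1) then 1
      else if (x == 0) && (y == 0) then v^-1
      else if (x == -1) && (y == 1) then v ^- 2
      else 0
  | _ => 0
  end.

Definition ttens (s : bool) : vec := fun J =>
  if J == [:: 1; 0; -1] then 1
  else if J == [:: 0; 1; -1] then v^-1
  else if J == [:: 1; -1; 0] then v^-1
  else if J == [:: 0; -1; 1] then v ^- 2
  else if J == [:: -1; 1; 0] then v ^- 2
  else if J == [:: -1; 0; 1] then v ^- 3
  else 0.

Definition sigma (a b : bool) : vec := fun J =>
  match J with
  | [:: x; y] =>
      if (x == -1) && (y == 1) then 1
      else if (x == 0) && (y == 0) then v
      else if (x == 1) && (y == -1) then v ^+ 2
      else 0
  | _ => 0
  end.

(* slice operations (reading bottom to top):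
   [ins k x r w] inserts the r-strand tensor x just before strand k
   (a cup, r = 2, or a vertex, r = 3);
   [cap k f w] joins strands k and k+1 by a cap applying the form f. *)
Definition ins (k : nat) (x : vec) (r : nat) (w : vec) : vec := fun J =>
  x (take r (drop k J)) * w (take k J ++ drop (k + r) J).

Definition cap (k : nat) (f : vec) (w : vec) : vec := fun J =>
  \sum_(m <- all_strings 2) f m * w (take k J ++ m ++ drop k J).

(* the three kinds of pieces attached by the growth algorithm at strands
   k, k+1, isotoped so that every trivalent vertex has its edges leaving
   upward, then read slice by slice from the bottom *)

Definition cup_piece (k : nat) (s : bool) (w : vec) : vec :=
  ins k (btens s (~~ s)) 2 w.

(* Y: strands k, k+1 of sign s meet at a vertex whose third edge goes down
   as strand k (sign ~~s); that edge is bent up on the left by a cap *)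
Definition Y_piece (k : nat) (s : bool) (w : vec) : vec :=
  cap k (sigma (~~ s) s) (ins k.+1 (ttens s) 3 w).

Definition H_piece (k : nat) (s : bool) (w : vec) : vec :=
  let w1 := ins k.+1 (ttens s) 3 w in          (* x x' p h y    *)
  let w2 := cap k (sigma (~~ s) s) w1 in       (* p h y         *)
  let w3 := ins k.+2 (ttens (~~ s)) 3 w2 in    (* p h e1 e2 e3 y *)
  let w4 := cap k.+1 (sigma s (~~ s)) w3 in    (* p e2 e3 y     *)
  cap k.+2 (sigma (~~ s) s) w4.                (* p e2          *)

Definition H_rule (j j' : int) : option (int * int) :=
  if (j == 1) && (j' == 0) then Some (0, 1)
  else if (j == 0) && (j' == 0) then Some (-1, 1)
  else if (j == 0) && (j' == -1) then Some (-1, 0)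
  else None.

Definition Y_rule (j j' : int) : option int :=
  if (j == 1) && (j' == 0) then Some 1
  else if (j == 0) && (j' == -1) then Some (-1)
  else if (j == 1) && (j' == -1) then Some 0
  else None.

(* [grows SJ w]: some run of the growth algorithm started from the strings
   SJ (pairs (sign, state)) ends with empty strings, and w is the value of
   the web it produces. *)
Inductive grows : seq (bool * int) -> vec -> Prop :=
| grows_nil : grows [::] vec_one
| grows_H (L R : seq (bool * int)) (s : bool) (j j' a b : int) (w : vec) :
    H_rule j j' = Some (a, b) ->
    grows (L ++ [:: (~~ s, a); (s, b)] ++ R) w ->
    grows (L ++ [:: (s, j); (~~ s, j')] ++ R) (H_piece (size L) s w)
| grows_cup (L R : seq (bool * int)) (s : bool) (w : vec) :
    grows (L ++ R) w ->
    grows (L ++ [:: (s, 1); (~~ s, -1)] ++ R) (cup_piece (size L) s w)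
| grows_Y (L R : seq (bool * int)) (s : bool) (j j' m : int) (w : vec) :
    Y_rule j j' = Some m ->
    grows (L ++ [:: (~~ s, m)] ++ R) w ->
    grows (L ++ [:: (s, j); (s, j')] ++ R) (Y_piece (size L) s w).

Definition nlaurent (x : F) : Prop :=
  exists (k : nat) (cs : seq nat),
    x = (\sum_(i < size cs) (nth 0%N cs i)%:R * v ^+ i) * v ^- k.

End Values.

(* Main.v *)
Require Import Defs.
From HB Require Import structures.
From mathcomp Require Import all_boot all_order all_algebra zify.
Set Implicit Arguments. Unset Strict Implicit. Unset Printing Implicit Defensive.
Import Order.TTheory GRing.Theory Num.Theory.
Local Open Scope ring_scope.

Lemma lexlt_irr (a : seq int) : lexlt a a = false.
Proof. by elim: a => //= x a ->; rewrite ltxx andbF. Qed.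

Lemma lexlt_cat (p p' a b : seq int) : size p = size p' ->
  lexlt (p ++ a) (p' ++ b) = lexlt p p' || (p == p') && lexlt a b.
Proof.
elim: p p' => [|x p IH] [|y p'] //= [] /IH ->.
by rewrite eqseq_cons; case: (x < y); case: (x == y); case: (lexlt p p'); case: (p == p').
Qed.

Lemma lexlt_total (a b : seq int) : size a = size b -> a != b ->
  lexlt a b || lexlt b a.
Proof.
elim: a b => [|x a IH] [|y b] //= [] /IH H.
rewrite eqseq_cons negb_and => hne.
case: (ltgtP x y) => //= exy.
by rewrite exy eqxx /= in hne; apply: H.
Qed.


Definition mono {C : numClosedFieldType} (e : nat * nat) : F C :=
  v C ^+ e.1 * v C ^- e.2.

Definition pos {C : numClosedFieldType} (x : F C) : Prop :=
  exists l : seq (nat * nat), x = \sum_(e <- l) mono e.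

Lemma pos0 {C : numClosedFieldType} : pos (0 : F C).
Proof. by exists [::]; rewrite big_nil. Qed.

Lemma posD {C : numClosedFieldType} (x y : F C) : pos x -> pos y -> pos (x + y).
Proof. by move=> [l1 ->] [l2 ->]; exists (l1 ++ l2); rewrite big_cat. Qed.

Lemma posM {C : numClosedFieldType} (x y : F C) : pos x -> pos y -> pos (x * y).
Proof.
move=> [l1 ->] [l2 ->]; exists [seq (a.1 + b.1, a.2 + b.2)%N | a <- l1, b <- l2].
rewrite big_allpairs_dep /= big_distrl /=; apply: eq_bigr => a _.
rewrite big_distrr /=; apply: eq_bigr => b _.
by rewrite /mono /= !exprD invfM mulrACA.
Qed.

Lemma posmono {C : numClosedFieldType} e : pos (mono e : F C).
Proof. by exists [:: e]; rewrite big_seq1. Qed.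

Lemma pos1 {C : numClosedFieldType} : pos (1 : F C).
Proof. by have := posmono (C:=C) (0,0)%N; rewrite /mono /= expr0 invr1 mulr1. Qed.

Lemma posv {C : numClosedFieldType} : pos (v C).
Proof. by have := posmono (C:=C) (1,0)%N; rewrite /mono /= expr0 invr1 mulr1. Qed.

Lemma posvV {C : numClosedFieldType} (k : nat) : pos (v C ^- k).
Proof. by have := posmono (C:=C) (0,k)%N; rewrite /mono /= expr0 mul1r. Qed.

Lemma posX {C : numClosedFieldType} (k : nat) : pos (v C ^+ k).
Proof. by have := posmono (C:=C) (k,0)%N; rewrite /mono /= expr0 invr1 mulr1. Qed.

Lemma pos_sum {C : numClosedFieldType} (T : eqType) (r : seq T) (G : T -> F C) :
  (forall i, i \in r -> pos (G i)) -> pos (\sum_(i <- r) G i).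
Proof.
elim: r => [|i r IH] H; first by rewrite big_nil; apply: pos0.
rewrite big_cons; apply: posD; first by apply: H; rewrite inE eqxx.
by apply: IH => j hj; apply: H; rewrite inE hj orbT.
Qed.

Lemma v_neq0 {C : numClosedFieldType} : v C != 0.
Proof. by rewrite /v tofrac_eq0 polyX_eq0. Qed.

Definition Nsum {C : numClosedFieldType} (cs : seq nat) : F C :=
  \sum_(i < size cs) (nth 0%N cs i)%:R * v C ^+ i.

Lemma Nsum_nil {C : numClosedFieldType} : Nsum (C:=C) [::] = 0.
Proof. by rewrite /Nsum big_ord0. Qed.

Lemma Nsum_cons {C : numClosedFieldType} c cs :
  Nsum (C:=C) (c :: cs) = c%:R + v C * Nsum cs.
Proof.
rewrite /Nsum /= big_ord_recl /= expr0 mulr1 big_distrr /=; congr (_ + _).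
by apply: eq_bigr => i _; rewrite exprS mulrCA.
Qed.

Lemma Nsum_ncons {C : numClosedFieldType} m :
  Nsum (C:=C) (ncons m 0%N [:: 1%N]) = v C ^+ m.
Proof.
elim: m => [|m IH]; first by rewrite /= Nsum_cons Nsum_nil mulr0 addr0 expr0.
by rewrite /= Nsum_cons IH ?mulr0n add0r exprS.
Qed.

Lemma Nsum_incr {C : numClosedFieldType} cs m :
  Nsum (C:=C) (incr_nth cs m) = Nsum cs + v C ^+ m.
Proof.
elim: cs m => [|c cs IH] [|m] /=.
- by rewrite Nsum_cons Nsum_nil mulr0 addr0 add0r expr0.
- by rewrite Nsum_cons Nsum_ncons Nsum_nil ?mulr0n !add0r exprS.
- by rewrite !Nsum_cons expr0 -addn1 natrD addrAC.
- by rewrite !Nsum_cons IH mulrDr exprS addrA.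
Qed.

Lemma Nsum_shift {C : numClosedFieldType} d cs :
  Nsum (C:=C) (nseq d 0%N ++ cs) = v C ^+ d * Nsum cs.
Proof.
elim: d => [|d IH]; first by rewrite expr0 mul1r.
by rewrite /= Nsum_cons IH ?mulr0n add0r exprS mulrA.
Qed.

Lemma pos_nlaurent {C : numClosedFieldType} (x : F C) : pos x -> nlaurent x.
Proof.
move=> [l ->]; rewrite /nlaurent.
suff [k [cs E]] : exists k cs, \sum_(e <- l) mono e = Nsum (C:=C) cs * v C ^- k.
  by exists k, cs.
elim: l => [|[a b] l [k [cs IH]]].
  by exists 0%N, [::]; rewrite big_nil Nsum_nil mul0r.
exists (k + b)%N, (incr_nth (nseq b 0%N ++ cs) (a + k)%N).
rewrite big_cons IH Nsum_incr Nsum_shift mulrDl /mono /=.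
have hv := v_neq0 (C:=C).
have hk := expf_neq0 k hv; have hb := expf_neq0 b hv.
rewrite addrC; congr (_ + _).
  rewrite exprD invfM [(v C ^+ k)^-1 * _]mulrC mulrA.
  by rewrite [_ * Nsum cs]mulrC (mulfK hb).
rewrite !exprD invfM [(v C ^+ k)^-1 * _]mulrC mulrA.
by rewrite mulrAC (mulfK hk).
Qed.

Definition st : seq int := [:: 1; 0; -1].

Lemma state_st (u : int) : is_state u -> u \in st.
Proof. by rewrite /is_state /st !inE; case/or3P => ->; rewrite ?orbT. Qed.

Lemma ins_at {C : numClosedFieldType} k p t x r (X : vec C) :
  size p = k -> ins k x r X (p ++ t) = x (take r t) * X (p ++ drop r t).
Proof.
move=> <-; rewrite /ins drop_size_cat // take_size_cat //.
by rewrite drop_cat ltnNge leq_addr /= addKn.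
Qed.

Lemma cap_at {C : numClosedFieldType} k p t f (X : vec C) :
  size p = k -> cap k f X (p ++ t) = \sum_(m <- all_strings 2) f m * X (p ++ m ++ t).
Proof. by move=> <-; rewrite /cap take_size_cat // drop_size_cat. Qed.

Lemma cap_sigma {C : numClosedFieldType} a b (G : seq int -> F C) :
  \sum_(m <- all_strings 2) sigma C a b m * G m =
  \sum_(c <- st) sigma C a b [:: c; -c] * G [:: c; -c].
Proof.
rewrite /= !big_cons !big_nil /sigma /=.
by rewrite !mul0r !add0r !addr0.
Qed.

Lemma Y_formula {C : numClosedFieldType} s (w : vec C) p t u1 u2 :
  Y_piece (size p) s w (p ++ [:: u1; u2] ++ t) =
  \sum_(c <- st) (sigma C (~~ s) s [:: c; -c] * ttens C s [:: -c; u1; u2])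
                 * w (p ++ [:: c] ++ t).
Proof.
rewrite /Y_piece cap_at // cap_sigma; apply: eq_bigr => c _.
rewrite -mulrA; congr (_ * _).
rewrite (_ : p ++ [:: c; -c] ++ [:: u1; u2] ++ t
           = rcons p c ++ ([:: -c; u1; u2] ++ t)); last by rewrite cat_rcons.
by rewrite ins_at ?size_rcons // take_size_cat // drop_size_cat // cat_rcons.
Qed.

Lemma cup_formula {C : numClosedFieldType} s (w : vec C) p t u1 u2 :
  cup_piece (size p) s w (p ++ [:: u1; u2] ++ t) =
  btens C s (~~ s) [:: u1; u2] * w (p ++ t).
Proof. by rewrite /cup_piece ins_at // take_size_cat // drop_size_cat. Qed.

Definition idxH : seq (int * (int * int)) :=
  [seq (c, na) | c <- st, na <- [seq (n, a) | n <- st, a <- st]].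

Definition coefH {C : numClosedFieldType} (u1 u2 : int) (i : int * (int * int)) : F C :=
  sigma C true true [:: i.1; - i.1] * (sigma C true true [:: i.2.1; - i.2.1] *
   (ttens C true [:: - i.2.1; u2; i.1] *
    (sigma C true true [:: i.2.2; - i.2.2] * ttens C true [:: - i.2.2; u1; i.2.1]))).

Definition xofH (i : int * (int * int)) : seq int := [:: i.2.2; - i.1].

Lemma H_formula {C : numClosedFieldType} s (w : vec C) p t u1 u2 :
  H_piece (size p) s w (p ++ [:: u1; u2] ++ t) =
  \sum_(i <- idxH) coefH u1 u2 i * w (p ++ xofH i ++ t).
Proof.
rewrite /H_piece.
set w1 := ins (size p).+1 _ 3 w.
set w2 := cap (size p) _ w1.
set w3 := ins (size p).+2 _ 3 w2.
set w4 := cap (size p).+1 _ w3.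
have E1 : forall a n c, w1 (p ++ [:: a, -a, u1, n, -c & t]) =
    ttens C s [:: -a; u1; n] * w (p ++ [:: a; -c] ++ t).
  move=> a n c.
  rewrite (_ : p ++ _ = rcons p a ++ ([:: -a; u1; n] ++ (-c :: t))); last by rewrite cat_rcons.
  by rewrite /w1 ins_at ?size_rcons // take_size_cat // drop_size_cat // cat_rcons.
have E2 : forall n c, w2 (p ++ [:: u1, n, -c & t]) =
    \sum_(a <- st) sigma C (~~ s) s [:: a; -a] * (ttens C s [:: -a; u1; n] * w (p ++ [:: a; -c] ++ t)).
  move=> n c; rewrite /w2 cap_at // cap_sigma; apply: eq_bigr => a _.
  by congr (_ * _); exact: E1.
have E3 : forall n c, w3 ((p ++ [:: u1; n]) ++ [:: -n; u2; c] ++ (-c :: t)) =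
    ttens C (~~ s) [:: -n; u2; c] * w2 ((p ++ [:: u1; n]) ++ (-c :: t)).
  move=> n c; rewrite /w3 ins_at; last by rewrite size_cat addn2.
  by rewrite take_size_cat // drop_size_cat.
have E4 : forall c, w4 (rcons p u1 ++ [:: u2, c, -c & t]) =
    \sum_(n <- st) sigma C s (~~ s) [:: n; -n] * (ttens C (~~ s) [:: -n; u2; c] *
      \sum_(a <- st) sigma C (~~ s) s [:: a; -a] * (ttens C s [:: -a; u1; n] * w (p ++ [:: a; -c] ++ t))).
  move=> c; rewrite /w4 cap_at ?size_rcons // cap_sigma; apply: eq_bigr => n _.
  congr (_ * _).
  rewrite (_ : rcons p u1 ++ _ = (p ++ [:: u1; n]) ++ [:: -n; u2; c] ++ (-c :: t)); last first.
    by rewrite cat_rcons -catA.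
  rewrite E3; congr (_ * _).
  by rewrite -catA; exact: E2.
rewrite (_ : p ++ [:: u1; u2] ++ t = (p ++ [:: u1; u2]) ++ t); last by rewrite catA.
rewrite cap_at; last by rewrite size_cat addn2.
rewrite cap_sigma /idxH big_allpairs_dep; apply: eq_bigr => c _.
rewrite (_ : (p ++ [:: u1; u2]) ++ [:: c; -c] ++ t = rcons p u1 ++ [:: u2, c, -c & t]); last first.
  by rewrite -catA cat_rcons.
rewrite E4 big_allpairs_dep big_distrr; apply: eq_bigr => n _.
rewrite !big_distrr; apply: eq_bigr => a _.
by rewrite /coefH /xofH /= !mulrA.
Qed.

Definition tsupp (t : seq int) : bool :=
  t \in [:: [:: 1; 0; -1]; [:: 0; 1; -1]; [:: 1; -1; 0]; [:: 0; -1; 1];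
           [:: -1; 1; 0]; [:: -1; 0; 1]].

Lemma ttens_out {C : numClosedFieldType} s t : ~~ tsupp t -> ttens C s t = 0.
Proof.
rewrite /tsupp /ttens !inE.
by do 6?[case: (_ == _) => //=].
Qed.

Definition bsupp (x y : int) : bool :=
  [|| (x == 1) && (y == -1), (x == 0) && (y == 0) | (x == -1) && (y == 1)].

Lemma btens_out {C : numClosedFieldType} a b x y : ~~ bsupp x y -> btens C a b [:: x; y] = 0.
Proof.
rewrite /bsupp /btens.
by do 3?[case: (_ && _) => //=].
Qed.

Lemma pos_ttens {C : numClosedFieldType} s t : pos (ttens C s t).
Proof.
have h1 : pos ((v C)^-1) by have := posvV (C:=C) 1; rewrite expr1.
rewrite /ttens; repeat case: ifP => _; 
  by [apply: pos1 | apply: posvV | apply: pos0 | apply: h1].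
Qed.

Lemma pos_sigma {C : numClosedFieldType} a b t : pos (sigma C a b t).
Proof.
rewrite /sigma; case: t => [|x [|y [|z t]]]; try exact: pos0.
repeat case: ifP => _; by [apply: pos1 | apply: posX | apply: pos0 | apply: posv].
Qed.

Lemma pos_btens {C : numClosedFieldType} a b t : pos (btens C a b t).
Proof.
have h1 : pos ((v C)^-1) by have := posvV (C:=C) 1; rewrite expr1.
rewrite /btens; case: t => [|x [|y [|z t]]]; try exact: pos0.
repeat case: ifP => _; by [apply: pos1 | apply: posvV | apply: pos0 | apply: h1].
Qed.

Definition Inv {C : numClosedFieldType} (w : vec C) (J : seq int) : Prop :=
  [/\ all is_state J,
      (forall K, size K = size J -> all is_state K -> pos (w K)),
      w J = 1 &
      (forall K, size K = size J -> all is_state K -> lexlt J K -> w K = 0)].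

Lemma split3 (K : seq int) k m : size K = (k + (2 + m))%N ->
  exists p u1 u2 t, [/\ K = p ++ [:: u1; u2] ++ t, size p = k & size t = m].
Proof.
move=> hs; exists (take k K).
have hd := size_drop k K.
case E: (drop k K) hd => [|u1 [|u2 t]] /= hd.
- by rewrite hs in hd; lia.
- by rewrite hs in hd; lia.
exists u1, u2, t; split.
- by rewrite -E cat_take_drop.
- by rewrite size_takel // hs leq_addr.
- by rewrite hs in hd; lia.
Qed.

Lemma step {C : numClosedFieldType} (T : eqType) (idx : seq T)
  (coef : int -> int -> T -> F C) (xof : T -> seq int) (W w : vec C)
  (p0 s0 x0 : seq int) (u01 u02 : int) (t0 : T) :
  Inv w (p0 ++ x0 ++ s0) ->
  is_state u01 -> is_state u02 ->
  (forall p t u1 u2, size p = size p0 ->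
     W (p ++ [:: u1; u2] ++ t) = \sum_(i <- idx) coef u1 u2 i * w (p ++ xof i ++ t)) ->
  (forall i, i \in idx -> size (xof i) = size x0 /\ all is_state (xof i)) ->
  (forall u1 u2 i, pos (coef u1 u2 i)) ->
  (forall u1 u2 i, is_state u1 -> is_state u2 -> i \in idx ->
     ([:: u1; u2] == [:: u01; u02]) || lexlt [:: u01; u02] [:: u1; u2] ->
     coef u1 u2 i = 0 \/ lexlt x0 (xof i) \/ (u1 = u01 /\ u2 = u02 /\ i = t0)) ->
  t0 \in idx -> uniq idx -> xof t0 = x0 -> coef u01 u02 t0 = 1 ->
  Inv W (p0 ++ [:: u01; u02] ++ s0).
Proof.
move=> [hJs hpos hJ hzero] hu1 hu2 hW hx hcp hsupp ht0 huniq hxt0 hct0.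
move: (hJs); rewrite !all_cat => /and3P[hp0 hx0 hs0].
have decomp : forall K, size K = size (p0 ++ [:: u01; u02] ++ s0) -> all is_state K ->
   exists p u1 u2 t, [/\ K = p ++ [:: u1; u2] ++ t, size p = size p0, size t = size s0 &
     [&& all is_state p, is_state u1, is_state u2 & all is_state t]].
  move=> K hK hKs; rewrite !size_cat /= in hK.
  have [p [u1 [u2 [t [EK hp ht]]]]] := split3 hK.
  exists p, u1, u2, t; split => //; move: hKs; rewrite EK !all_cat.
  by case/and3P=> a /and3P[b c _] d; rewrite a b c d.
have szl : forall p t i, i \in idx -> size p = size p0 -> size t = size s0 ->
    size (p ++ xof i ++ t) = size (p0 ++ x0 ++ s0).
  by move=> p t i hi hp ht; rewrite !size_cat hp ht (hx i hi).1.
have stl : forall p t i, i \in idx -> all is_state p -> all is_state t ->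
    all is_state (p ++ xof i ++ t).
  by move=> p t i hi hp ht; rewrite !all_cat hp ht (hx i hi).2.
split.
- by rewrite !all_cat hp0 hs0 /= hu1 hu2.
- move=> K hK hKs; have [p [u1 [u2 [t [-> hp ht /and4P[hps h1 h2 hts]]]]]] := decomp K hK hKs.
  rewrite hW //; apply: pos_sum => i hi; apply: posM; first exact: hcp.
  by apply: hpos; [apply: szl | apply: stl].
- rewrite hW // (bigD1_seq t0) //= hxt0 hJ hct0 mulr1 big1_seq ?addr0 //.
  move=> i /andP[hne hi].
  have := hsupp u01 u02 i hu1 hu2 hi; rewrite eqxx => /(_ isT).
  case => [->|[hl|[_ [_ E]]]]; [by rewrite mul0r | | by rewrite E eqxx in hne].
  rewrite hzero ?mulr0 //; [by apply: szl | by apply: stl |].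
  by rewrite lexlt_cat // eqxx lexlt_cat ?hl ?orbT // (hx i hi).1.
- move=> K hK hKs hlt; have [p [u1 [u2 [t [EK hp ht /and4P[hps h1 h2 hts]]]]]] := decomp K hK hKs.
  rewrite EK hW //; apply: big1_seq => i /andP[_ hi].
  move: hlt; rewrite EK lexlt_cat ?hp // => /orP[hpp | /andP[/eqP Ep hrest]].
    rewrite hzero ?mulr0 //; [by apply: szl | by apply: stl |].
    by rewrite lexlt_cat ?hp // hpp.
  subst p; move: hrest; rewrite lexlt_cat // => hrest.
  have cond : ([:: u1; u2] == [:: u01; u02]) || lexlt [:: u01; u02] [:: u1; u2].
    by case/orP: hrest => [->|/andP[/eqP <- _]]; rewrite ?orbT ?eqxx.
  case: (hsupp u1 u2 i h1 h2 hi cond) => [->|[hl|[E1 [E2 E3]]]]; first by rewrite mul0r.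
    rewrite hzero ?mulr0 //; [by apply: szl | by apply: stl |].
    by rewrite lexlt_cat // eqxx lexlt_cat ?hl ?orbT // (hx i hi).1.
  subst u1 u2 i; rewrite lexlt_irr eqxx /= in hrest.
  rewrite hxt0 hzero ?mulr0 //.
  - by rewrite !size_cat ht.
  - by rewrite !all_cat hp0 hx0 hts.
  by rewrite lexlt_cat // eqxx lexlt_cat // eqxx hrest !orbT.
Qed.

Lemma supp_of_check {C : numClosedFieldType} (T : eqType) (idx : seq T)
  (coef : int -> int -> T -> F C) (xof : T -> seq int) (supp : int -> int -> T -> bool)
  (u01 u02 : int) (x0 : seq int) (t0 : T) :
  (forall u1 u2 i, ~~ supp u1 u2 i -> coef u1 u2 i = 0) ->
  all (fun u1 => all (fun u2 => all (fun i =>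
      (([:: u1; u2] == [:: u01; u02]) || lexlt [:: u01; u02] [:: u1; u2]) ==>
      [|| ~~ supp u1 u2 i, lexlt x0 (xof i) | (u1 == u01) && (u2 == u02) && (i == t0)])
    idx) st) st ->
  forall u1 u2 i, is_state u1 -> is_state u2 -> i \in idx ->
     ([:: u1; u2] == [:: u01; u02]) || lexlt [:: u01; u02] [:: u1; u2] ->
     coef u1 u2 i = 0 \/ lexlt x0 (xof i) \/ (u1 = u01 /\ u2 = u02 /\ i = t0).
Proof.
move=> hz hc u1 u2 i h1 h2 hi hcond.
move: (allP hc u1 (state_st h1)) => /allP /(_ u2 (state_st h2)) /allP /(_ i hi).
rewrite hcond /= => /or3P[hs|hl|/andP[/andP[/eqP-> /eqP->] /eqP->]].
- by left; apply: hz.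
- by right; left.
- by right; right.
Qed.

Definition suppH (u1 u2 : int) (i : int * (int * int)) : bool :=
  tsupp [:: - i.2.1; u2; i.1] && tsupp [:: - i.2.2; u1; i.2.1].

Lemma coefH_out {C : numClosedFieldType} u1 u2 i : ~~ suppH u1 u2 i -> coefH (C:=C) u1 u2 i = 0.
Proof.
rewrite /suppH negb_and => /orP[h|h]; rewrite /coefH (ttens_out _ h).
  by rewrite mul0r !mulr0.
by rewrite !mulr0.
Qed.

Lemma pos_coefH {C : numClosedFieldType} u1 u2 i : pos (coefH (C:=C) u1 u2 i).
Proof.
by rewrite /coefH; repeat apply: posM; rewrite ?pos_sigma ?pos_ttens;
  (apply: pos_sigma || apply: pos_ttens).
Qed.

Lemma xofH_ok i : i \in idxH -> size (xofH i) = 2%N /\ all is_state (xofH i).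
Proof.
have : all (fun i => all is_state (xofH i)) idxH by vm_compute.
by move=> /allP h hi; split => //; apply: h.
Qed.

Definition coefY {C : numClosedFieldType} (u1 u2 : int) (c : int) : F C :=
  sigma C true true [:: c; -c] * ttens C true [:: -c; u1; u2].
Definition xofY (c : int) : seq int := [:: c].
Definition suppY (u1 u2 : int) (c : int) : bool := tsupp [:: -c; u1; u2].

Lemma coefY_out {C : numClosedFieldType} u1 u2 i : ~~ suppY u1 u2 i -> coefY (C:=C) u1 u2 i = 0.
Proof. by move=> h; rewrite /coefY (ttens_out _ h) mulr0. Qed.

Lemma pos_coefY {C : numClosedFieldType} u1 u2 i : pos (coefY (C:=C) u1 u2 i).
Proof. by apply: posM; [apply: pos_sigma | apply: pos_ttens]. Qed.

Lemma xofY_ok i : i \in st -> size (xofY i) = 1%N /\ all is_state (xofY i).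
Proof.
have : all (fun i => all is_state (xofY i)) st by vm_compute.
by move=> /allP h hi; split => //; apply: h.
Qed.

Definition coefC {C : numClosedFieldType} (u1 u2 : int) (c : unit) : F C :=
  btens C true true [:: u1; u2].
Definition xofC (c : unit) : seq int := [::].
Definition suppC (u1 u2 : int) (c : unit) : bool := bsupp u1 u2.

Lemma grows_inv {C : numClosedFieldType} SJ (w : vec C) : grows SJ w -> Inv w (unzip2 SJ).
Proof.
have hv := v_neq0 (C:=C).
elim => [| L R s j j' a b w0 hr _ IH | L R s w0 _ IH | L R s j j' m w0 hr _ IH].
- split.
  + by [].
  + by move=> [|//] _ _; rewrite /vec_one /=; apply: pos1.
  + by rewrite /vec_one /=.
  + by [].
- rewrite /unzip2 !map_cat /= in IH *.
  have hW : forall p t u1 u2, size p = size (map snd L) ->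
      H_piece (size L) s w0 (p ++ [:: u1; u2] ++ t) =
      \sum_(i <- idxH) coefH u1 u2 i * w0 (p ++ xofH i ++ t).
    by move=> p t u1 u2 hp; rewrite -(size_map snd L) -hp H_formula.
  move: hr; rewrite /H_rule.
  case: ifP => [/andP[/eqP-> /eqP->] [ea eb]|_].
    subst a b.
    apply: (@step C _ idxH coefH xofH _ w0 (map snd L) (map snd R) [:: 0; 1] 1 0 (-1, (-1, 0))).
    + exact: IH.
    + by [].
    + by [].
    + exact: hW.
    + exact: xofH_ok.
    + exact: pos_coefH.
    + by apply: (supp_of_check (supp := suppH)); [apply: coefH_out | vm_compute].
    + by vm_compute.
    + by vm_compute.
    + by [].
    + by rewrite /coefH /sigma /ttens /= !mul1r (mulfV hv).
  case: ifP => [/andP[/eqP-> /eqP->] [ea eb]|_].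
    subst a b.
    apply: (@step C _ idxH coefH xofH _ w0 (map snd L) (map snd R) [:: -1; 1] 0 0 (-1, (-1, -1))).
    + exact: IH.
    + by [].
    + by [].
    + exact: hW.
    + exact: xofH_ok.
    + exact: pos_coefH.
    + by apply: (supp_of_check (supp := suppH)); [apply: coefH_out | vm_compute].
    + by vm_compute.
    + by vm_compute.
    + by [].
    + by rewrite /coefH /sigma /ttens /= !mul1r.
  case: ifP => [/andP[/eqP-> /eqP->] [ea eb]|_]; last by move=> [].
  subst a b.
  apply: (@step C _ idxH coefH xofH _ w0 (map snd L) (map snd R) [:: -1; 0] 0 (-1) (0, (-1, -1))).
  + exact: IH.
  + by [].
  + by [].
  + exact: hW.
  + exact: xofH_ok.
  + exact: pos_coefH.
  + by apply: (supp_of_check (supp := suppH)); [apply: coefH_out | vm_compute].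
  + by vm_compute.
  + by vm_compute.
  + by [].
  + by rewrite /coefH /sigma /ttens /= !mul1r !mulr1 (mulfV hv).
- rewrite /unzip2 !map_cat /= in IH *.
  apply: (@step C _ [:: tt] coefC xofC _ w0 (map snd L) (map snd R) [::] 1 (-1) tt).
  + exact: IH.
  + by [].
  + by [].
  + move=> p t u1 u2 hp.
    by rewrite big_seq1 (_ : size L = size p) ?cup_formula // hp size_map.
  + by move=> i _; split.
  + by move=> u1 u2 i; apply: pos_btens.
  + apply: (supp_of_check (supp := suppC)); last by vm_compute.
    by move=> u1 u2 i; apply: btens_out.
  + by vm_compute.
  + by vm_compute.
  + by [].
  + by rewrite /coefC /btens /=.
- rewrite /unzip2 !map_cat /= in IH *.
  have hW : forall p t u1 u2, size p = size (map snd L) ->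
      Y_piece (size L) s w0 (p ++ [:: u1; u2] ++ t) =
      \sum_(i <- st) coefY u1 u2 i * w0 (p ++ xofY i ++ t).
    by move=> p t u1 u2 hp; rewrite -(size_map snd L) -hp Y_formula.
  move: hr; rewrite /Y_rule.
  case: ifP => [/andP[/eqP-> /eqP->] [em]|_].
    subst m.
    apply: (@step C _ st coefY xofY _ w0 (map snd L) (map snd R) [:: 1] 1 0 1).
    + exact: IH.
    + by [].
    + by [].
    + exact: hW.
    + exact: xofY_ok.
    + exact: pos_coefY.
    + by apply: (supp_of_check (supp := suppY)); [apply: coefY_out | vm_compute].
    + by vm_compute.
    + by vm_compute.
    + by [].
    + by rewrite /coefY /sigma /ttens /= (mulfV (expf_neq0 2 hv)).
  case: ifP => [/andP[/eqP-> /eqP->] [em]|_].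
    subst m.
    apply: (@step C _ st coefY xofY _ w0 (map snd L) (map snd R) [:: -1] 0 (-1) (-1)).
    + exact: IH.
    + by [].
    + by [].
    + exact: hW.
    + exact: xofY_ok.
    + exact: pos_coefY.
    + by apply: (supp_of_check (supp := suppY)); [apply: coefY_out | vm_compute].
    + by vm_compute.
    + by vm_compute.
    + by [].
    + by rewrite /coefY /sigma /ttens /= mul1r.
  case: ifP => [/andP[/eqP-> /eqP->] [em]|_]; last by move=> [].
  subst m.
  apply: (@step C _ st coefY xofY _ w0 (map snd L) (map snd R) [:: 0] 1 (-1) 0).
  + exact: IH.
  + by [].
  + by [].
  + exact: hW.
  + exact: xofY_ok.
  + exact: pos_coefY.
  + by apply: (supp_of_check (supp := suppY)); [apply: coefY_out | vm_compute].
  + by vm_compute.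
  + by vm_compute.
  + by [].
  + by rewrite /coefY /sigma /ttens /= (mulfV hv).
Qed.

Unset Implicit Arguments.
Set Strict Implicit.

Theorem theorem6 (C : numClosedFieldType) (S : seq bool) (J : seq int)
    (w : vec C) :
  dominant S J ->
  grows (zip S J) w ->
  exists c : seq int -> F C,
    (forall J' : seq int, size J' = size S -> all is_state J' ->
       lexlt J' J -> nlaurent (c J')) /\
    (forall J' : seq int, size J' = size S -> all is_state J' ->
       w J' = (J' == J)%:R + (if lexlt J' J then c J' else 0)).
Proof.
move=> [hsz hst _ _] hg.
have [_ hpos hJ hzero] := grows_inv hg.
rewrite unzip2_zip in hpos hJ hzero; last by rewrite hsz.
exists w; split.
  by move=> J' h1 h2 _; apply: pos_nlaurent; apply: hpos; rewrite // hsz.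
move=> J' h1 h2.
case: (eqVneq J' J) => [->|hne].
  by rewrite lexlt_irr hJ addr0.
rewrite /= add0r; case: ifP => // hl.
have := lexlt_total (etrans h1 (esym hsz)) hne.
rewrite hl /= => hlt.
by apply: hzero; rewrite // hsz.
Qed.
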